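(* Let $k$ be a field, $A=k[\![x,y]\!]$, and $\mathfrak m=(x,y)$. Then $\Phi=\operatorname{Spec} A\setminus\{\mathfrak m\}$ is not a coherent subset of $\operatorname{Spec} A$.
   Context: $\operatorname{Ass} M$ is the set of associated primes of $M$. For $\Phi\subseteq\operatorname{Spec} A$, $\operatorname{Inj}_\Phi A$ is the full subcategory of injective $A$-modules $I$ with $\operatorname{Ass} I\subseteq\Phi$; $\Phi$ is coherent if every homomorphism $I^0\to I^1$ in $\operatorname{Inj}_\Phi A$ can be completed to an exact sequence $I^0\to I^1\to I^2$ with $I^2\in\operatorname{Inj}_\Phi A$. *)

(* Defs.v *)
From HB Require Import structures.
From mathcomp Require Import all_boot all_order all_algebra.
Set Implicit Arguments. Unset Strict Implicit. Unset Printing Implicit Defensive.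
Import GRing.Theory.
Local Open Scope ring_scope.

(* The ring A = k[[x,y]] of formal power series in two variables:
   a series is its coefficient function (i, j) |-> coefficient of x^i y^j. *)
Definition pser (k : fieldType) := nat -> nat -> k.

Section PowerSeries.
Variable k : fieldType.
Definition padd (f g : pser k) : pser k := fun i j => f i j + g i j.
Definition popp (f : pser k) : pser k := fun i j => - f i j.
Definition pzero : pser k := fun _ _ => 0.
Definition pone : pser k := fun i j => if (i == 0%N) && (j == 0%N) then 1 else 0.
Definition pmul (f g : pser k) : pser k := fun i j =>
  \sum_(a < i.+1) \sum_(b < j.+1) f a b * g (i - a)%N (j - b)%N.
Definition px : pser k := fun i j => if (i == 1%N) && (j == 0%N) then 1 else 0.
Definition py : pser k := fun i j => if (i == 0%N) && (j == 1%N) then 1 else 0.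

Definition is_ideal (P : pser k -> Prop) : Prop :=
  P pzero /\ (forall f g, P f -> P g -> P (padd f g)) /\ (forall f, P f -> P (popp f))
  /\ (forall a f, P f -> P (pmul a f)).
Definition prime_ideal (P : pser k -> Prop) : Prop :=
  is_ideal P /\ ~ P pone /\ (forall a b, P (pmul a b) -> P a \/ P b).
Definition maxideal : pser k -> Prop :=
  fun f => exists g h, f = padd (pmul px g) (pmul py h).
Definition same_pred (P Q : pser k -> Prop) : Prop := forall f, P f <-> Q f.
Definition Phi_punctured : (pser k -> Prop) -> Prop :=
  fun P => prime_ideal P /\ ~ same_pred P maxideal.
End PowerSeries.

Record pmodule (k : fieldType) := PModule {
  pcarrier :> zmodType;
  pact : pser k -> pcarrier -> pcarrier;
  pact1 : forall m, pact (pone k) m = m;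
  pactM : forall a b m, pact (pmul a b) m = pact a (pact b m);
  pactDl : forall a b m, pact (padd a b) m = pact a m + pact b m;
  pactDr : forall a m n, pact a (m + n) = pact a m + pact a n
}.

Section Modules.
Variable k : fieldType.

Definition is_hom (M N : pmodule k) (f : M -> N) : Prop :=
  (forall u v, f (u + v) = f u + f v) /\
  (forall a u, f (pact a u) = pact a (f u)).

Definition injective_module (I : pmodule k) : Prop :=
  forall (N N' : pmodule k) (i : N -> N') (h : N -> I),
    is_hom i -> injective i -> is_hom h ->
    exists h' : N' -> I, is_hom h' /\ forall n, h' (i n) = h n.

Definition Ass (M : pmodule k) (P : pser k -> Prop) : Prop :=
  prime_ideal P /\ exists m : M, forall a, P a <-> pact a m = 0.

Definition in_Inj (Phi : (pser k -> Prop) -> Prop) (I : pmodule k) : Prop :=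
  injective_module I /\ forall P, Ass I P -> Phi P.

Definition coherent (Phi : (pser k -> Prop) -> Prop) : Prop :=
  forall (I0 I1 : pmodule k) (f : I0 -> I1),
    in_Inj Phi I0 -> in_Inj Phi I1 -> is_hom f ->
    exists (I2 : pmodule k) (g : I1 -> I2),
      in_Inj Phi I2 /\ is_hom g /\
      forall u : I1, g u = 0 <-> exists v : I0, f v = u.
End Modules.

(* Main.v *)
Require Import Defs.
From HB Require Import structures.
From mathcomp Require Import all_boot all_order all_algebra.
From mathcomp Require Import boolp classical_sets.
From mathcomp Require Import ring zify.
From Stdlib Require Import FunctionalExtensionality ProofIrrelevance.
Set Implicit Arguments. Unset Strict Implicit. Unset Printing Implicit Defensive.
Import GRing.Theory.
Local Open Scope ring_scope.



Section PRing.
Variable k : fieldType.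
Local Notation P := {poly {poly k}}.
Definition trunc (N : nat) (f : pser k) : P := \poly_(a < N.+1) \poly_(b < N.+1) f a b.
Lemma coef2M (p q : P) i j : (p*q)`_i`_j = \sum_(a<i.+1) \sum_(b<j.+1) p`_a`_b * q`_(i-a)`_(j-b).
Proof. rewrite coefM coef_sum; apply: eq_bigr => a _; by rewrite coefM. Qed.
Definition agree N (p : P) (f : pser k) := forall a b, (a <= N)%N -> (b <= N)%N -> p`_a`_b = f a b.
Lemma agree_trunc N f : agree N (trunc N f) f.
Proof. by move=> a b Ha Hb; rewrite /trunc coef_poly ltnS Ha coef_poly ltnS Hb. Qed.
Arguments agree_trunc : clear implicits.
Lemma agree_mul N p q f g : agree N p f -> agree N q g -> agree N (p*q) (pmul f g).
Proof.
move=> Hp Hq i j Hi Hj; rewrite coef2M /pmul; apply: eq_bigr => a _; apply: eq_bigr => b _.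
have Ha : (a <= N)%N by apply: leq_trans Hi; rewrite -ltnS.
have Hb : (b <= N)%N by apply: leq_trans Hj; rewrite -ltnS.
rewrite Hp // Hq //; apply: leq_trans (leq_subr _ _) _ => //.
Qed.
Lemma agree_add N p q f g : agree N p f -> agree N q g -> agree N (p+q) (padd f g).
Proof. by move=> Hp Hq i j Hi Hj; rewrite !coefD Hp // Hq. Qed.
Lemma agree_opp N p f : agree N p f -> agree N (-p) (popp f).
Proof. by move=> Hp i j Hi Hj; rewrite !coefN Hp. Qed.
Lemma agree_one N : agree N 1 (pone k).
Proof. move=> i j _ _; rewrite coefC /pone; case: i => [|i] /=; last by rewrite coef0.
by rewrite coefC; case: j. Qed.
Arguments agree_one : clear implicits.
Lemma agree_uniq N p f g a b : agree N p f -> agree N p g -> (a <= N)%N -> (b <= N)%N -> f a b = g a b.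
Proof. by move=> H1 H2 Ha Hb; rewrite -H1 // -H2. Qed.

Lemma pmulA : associative (@pmul k).
Proof.
move=> f g h; apply: functional_extensionality => i; apply: functional_extensionality => j.
pose N := (i + j)%N.
have Hi : (i <= N)%N by rewrite leq_addr.
have Hj : (j <= N)%N by rewrite leq_addl.
have H1 := agree_mul (agree_trunc N f) (agree_mul (agree_trunc N g) (agree_trunc N h)).
have H2 := agree_mul (agree_mul (agree_trunc N f) (agree_trunc N g)) (agree_trunc N h).
by rewrite -H1 // -H2 // mulrA.
Qed.
Lemma pmulC : commutative (@pmul k).
Proof.
move=> f g; apply: functional_extensionality => i; apply: functional_extensionality => j.
pose N := (i + j)%N.
have Hi : (i <= N)%N by rewrite leq_addr.
have Hj : (j <= N)%N by rewrite leq_addl.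
by rewrite -(agree_mul (agree_trunc N f) (agree_trunc N g)) // -(agree_mul (agree_trunc N g) (agree_trunc N f)) // mulrC.
Qed.
Lemma pmul1 : left_id (pone k) (@pmul k).
Proof.
move=> f; apply: functional_extensionality => i; apply: functional_extensionality => j.
pose N := (i + j)%N.
have Hi : (i <= N)%N by rewrite leq_addr.
have Hj : (j <= N)%N by rewrite leq_addl.
by rewrite -(agree_mul (agree_one N) (agree_trunc N f)) // mul1r agree_trunc.
Qed.
Lemma pmulDl : left_distributive (@pmul k) (@padd k).
Proof.
move=> f g h; apply: functional_extensionality => i; apply: functional_extensionality => j.
pose N := (i + j)%N.
have Hi : (i <= N)%N by rewrite leq_addr.
have Hj : (j <= N)%N by rewrite leq_addl.
rewrite -(agree_mul (agree_add (agree_trunc N f) (agree_trunc N g)) (agree_trunc N h)) // mulrDl.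
by rewrite (agree_add (agree_mul (agree_trunc N f) (agree_trunc N h)) (agree_mul (agree_trunc N g) (agree_trunc N h))).
Qed.
Lemma paddA : associative (@padd k).
Proof. by move=> f g h; do 2 apply: functional_extensionality => ?; rewrite /padd addrA. Qed.
Lemma paddC : commutative (@padd k).
Proof. by move=> f g; do 2 apply: functional_extensionality => ?; rewrite /padd addrC. Qed.
Lemma padd0 : left_id (pzero k) (@padd k).
Proof. by move=> f; do 2 apply: functional_extensionality => ?; rewrite /padd /pzero add0r. Qed.
Lemma paddN : left_inverse (pzero k) (@popp k) (@padd k).
Proof. by move=> f; do 2 apply: functional_extensionality => ?; rewrite /padd /popp /pzero addNr. Qed.
Lemma pone_neq0 : pone k != pzero k.
Proof. apply/eqP => /(congr1 (fun f => f 0%N 0%N)); rewrite /pone /pzero /= => /eqP; by rewrite oner_eq0. Qed.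
End PRing.
Arguments agree_trunc {k} N f.
Arguments agree_one {k} N.

HB.instance Definition _ (k : fieldType) := gen_eqMixin (pser k).
HB.instance Definition _ (k : fieldType) := gen_choiceMixin (pser k).
HB.instance Definition _ (k : fieldType) := GRing.isZmodule.Build (pser k) (@paddA k) (@paddC k) (@padd0 k) (@paddN k).
HB.instance Definition _ (k : fieldType) := GRing.Zmodule_isComNzRing.Build (pser k) (@pmulA k) (@pmulC k) (@pmul1 k) (@pmulDl k) (@pone_neq0 k).

Section Test.
Variable k : fieldType.
Lemma test (a b c : pser k) : pmul a (pmul b c) = pmul (pmul c a) b.
Proof. change ((a * (b * c)) = (c * a) * b). ring. Qed.
End Test.



Section Coefs.
Variable k : fieldType.
Local Notation P := {poly {poly k}}.
Definition pconst (c : k) : pser k := fun i j => if (i == 0%N) && (j == 0%N) then c else 0.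

Lemma agree_X N : agree N ('X : P) (px k).
Proof. move=> a b _ _; rewrite coefX /px; case: (a == 1%N); last by rewrite coef0.
by rewrite coefC; case: b. Qed.
Lemma agree_Y N : agree N (('X)%:P : P) (py k).
Proof. move=> a b _ _; rewrite coefC /py; case: a => [|a] /=; last by rewrite coef0.
by rewrite coefX; case: b => [|[|b]]. Qed.
Lemma agree_C N c : agree N (c%:P%:P : P) (pconst c).
Proof. move=> a b _ _; rewrite coefC /pconst; case: a => [|a] /=; last by rewrite coef0.
by rewrite coefC; case: b. Qed.

Arguments agree_X : clear implicits.
Arguments agree_Y : clear implicits.
Arguments agree_C : clear implicits.
Lemma pxM (f : pser k) i j : (px k * f) i j = if i is i'.+1 then f i' j else 0.
Proof.
pose N := (i + j)%N.
have Hi : (i <= N)%N by rewrite leq_addr.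
have Hj : (j <= N)%N by rewrite leq_addl.
clearbody N.
rewrite -[LHS](agree_mul (agree_X N) (agree_trunc N f)) // coefXM.
case: i Hi => [|i] Hi /=; first by rewrite coef0.
by apply: agree_trunc => //; exact: ltnW.
Qed.
Lemma pyM (f : pser k) i j : (py k * f) i j = if j is j'.+1 then f i j' else 0.
Proof.
pose N := (i + j)%N.
have Hi : (i <= N)%N by rewrite leq_addr.
have Hj : (j <= N)%N by rewrite leq_addl.
clearbody N.
rewrite -[LHS](agree_mul (agree_Y N) (agree_trunc N f)) // coefCM coefXM.
case: j Hj => [|j] Hj //=.
by apply: agree_trunc => //; exact: ltnW.
Qed.
Lemma pCM (c : k) (f : pser k) i j : (pconst c * f) i j = c * f i j.
Proof.
pose N := (i + j)%N.
have Hi : (i <= N)%N by rewrite leq_addr.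
have Hj : (j <= N)%N by rewrite leq_addl.
by rewrite -[LHS](agree_mul (agree_C N c) (agree_trunc N f)) // !coefCM (agree_trunc N f).
Qed.
Lemma pxnM m (f : pser k) i j : (px k ^+ m * f) i j = if (m <= i)%N then f (i - m)%N j else 0.
Proof.
elim: m i => [|m IH] i; first by rewrite expr0 mul1r subn0.
rewrite exprS -mulrA pxM; case: i => [|i] //; rewrite IH.
Qed.
Lemma pynM m (f : pser k) i j : (py k ^+ m * f) i j = if (m <= j)%N then f i (j - m)%N else 0.
Proof.
elim: m j => [|m IH] j; first by rewrite expr0 mul1r subn0.
rewrite exprS -mulrA pyM; case: j => [|j] //; rewrite IH.
Qed.
Lemma pCC (c d : k) : pconst c * pconst d = pconst (c * d).
Proof. by do 2 apply: functional_extensionality => ?; rewrite pCM /pconst; case: ifP; rewrite ?mulr0. Qed.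
Lemma pC1 : pconst 1 = 1.
Proof. by []. Qed.
Lemma pone1 : pone k = 1. Proof. by []. Qed.
Lemma pmulE (a b : pser k) : pmul a b = a * b. Proof. by []. Qed.
Lemma paddE (a b : pser k) : padd a b = a + b. Proof. by []. Qed.
Lemma poppE (a : pser k) : popp a = - a. Proof. by []. Qed.
Lemma pzeroE : pzero k = 0. Proof. by []. Qed.
Lemma addE (a b : pser k) i j : (a + b) i j = a i j + b i j. Proof. by []. Qed.
Lemma oppE (a : pser k) i j : (- a) i j = - a i j. Proof. by []. Qed.
Lemma zeroE i j : (0 : pser k) i j = 0. Proof. by []. Qed.
Lemma oneE i j : (1 : pser k) i j = if (i == 0%N) && (j == 0%N) then 1 else 0. Proof. by []. Qed.
Lemma mulE00 (a b : pser k) : (a * b) 0%N 0%N = a 0%N 0%N * b 0%N 0%N.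
Proof. by rewrite /GRing.mul /= /pmul !big_ord1 !subnn. Qed.
End Coefs.



Section ModLemmas.
Variable k : fieldType.
Variable M : pmodule k.
Lemma pactMr (a b : pser k) (m : M) : pact (a * b) m = pact a (pact b m).
Proof. exact: pactM. Qed.
Lemma pactDlr (a b : pser k) (m : M) : pact (a + b) m = pact a m + pact b m.
Proof. exact: pactDl. Qed.
Lemma pact1r (m : M) : pact 1 m = m.
Proof. exact: pact1. Qed.
Lemma pactr0' (a : pser k) : pact a (0 : M) = 0.
Proof. have := pactDr a (0:M) 0; rewrite addr0 => /eqP; by rewrite -subr_eq subrr eq_sym => /eqP. Qed.
Lemma pact0l (m : M) : pact 0 m = 0.
Proof. have := pactDlr 0 0 m; rewrite addr0 => /eqP; by rewrite -subr_eq subrr eq_sym => /eqP. Qed.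
Lemma pactNl (a : pser k) (m : M) : pact (- a) m = - pact a m.
Proof. by apply/eqP; rewrite -addr_eq0 -pactDlr addNr pact0l. Qed.
Lemma pactNr (a : pser k) (m : M) : pact a (- m) = - pact a m.
Proof. by apply/eqP; rewrite -addr_eq0 -pactDr addNr pactr0'. Qed.
Lemma pactBr (a : pser k) (m n : M) : pact a (m - n) = pact a m - pact a n.
Proof. by rewrite pactDr pactNr. Qed.
Lemma pactBl (a b : pser k) (m : M) : pact (a - b) m = pact a m - pact b m.
Proof. by rewrite pactDlr pactNl. Qed.
End ModLemmas.



Section Ext.
Variable k : fieldType.
Variable M : pmodule k.
Definition sc (c : k) (m : M) : M := pact (pconst c) m.
Lemma pconstD (c d : k) : pconst (c + d) = pconst c + pconst d.
Proof. by do 2 apply: functional_extensionality => ?; rewrite addE /pconst; case: ifP; rewrite ?addr0. Qed.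
Lemma pconst0 : pconst (0 : k) = 0.
Proof. by do 2 apply: functional_extensionality => ?; rewrite /pconst; case: ifP. Qed.
Lemma scD c d m : sc (c + d) m = sc c m + sc d m.
Proof. by rewrite /sc pconstD pactDlr. Qed.
Lemma scDr c m n : sc c (m + n) = sc c m + sc c n.
Proof. by rewrite /sc pactDr. Qed.
Lemma scM c d m : sc c (sc d m) = sc (c * d) m.
Proof. by rewrite /sc -pactMr pCC. Qed.
Lemma sc1 m : sc 1 m = m.
Proof. by rewrite /sc pC1 pact1r. Qed.
Lemma sc0 m : sc 0 m = 0.
Proof. by rewrite /sc pconst0 pact0l. Qed.
Lemma scN1 m : sc (-1) m = - m.
Proof. by apply/eqP; rewrite -addr_eq0 -{2}(sc1 m) -scD addNr sc0. Qed.
Lemma scr0 c : sc c 0 = 0.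
Proof. exact: pactr0'. Qed.

Definition linrel (R : M -> k -> Prop) :=
  [/\ R 0 0, (forall u a v b, R u a -> R v b -> R (u + v) (a + b)),
      (forall c u a, R u a -> R (sc c u) (c * a)) &
      (forall u a b, R u a -> R u b -> a = b)].

Local Open Scope classical_set_scope.

Lemma extend (R : M -> k -> Prop) : linrel R ->
  exists L : M -> k, [/\ (forall u v, L (u + v) = L u + L v),
     (forall c u, L (sc c u) = c * L u) & (forall u a, R u a -> L u = a)].
Proof.
move=> HR.
pose P : set (set (M * k)%type) := fun A => linrel (fun u a => A (u, a) \/ R u a).
have [A [PA Amax]] : exists A, P A /\ forall B, A `<` B -> ~ P B.
  apply: Zorn_bigcup => F FP Ftot.
  case: HR => R0 RD RZ RU.
  have big2 : forall X Y u a v b, F X -> F Y -> (X (u, a) \/ R u a) -> (Y (v, b) \/ R v b) ->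
     exists Z, [/\ F Z, Z (u, a) \/ R u a & Z (v, b) \/ R v b].
    move=> X Y u a v b FX FY Hu Hv; case: (Ftot X Y FX FY) => sXY.
    - by exists Y; split => //; case: Hu => [/sXY|]; auto.
    - by exists X; split => //; case: Hv => [/sXY|]; auto.
  have unR : forall u a, R u a -> (\bigcup_(X in F) X) (u, a) \/ R u a by auto.
  have inR : forall Z u a, F Z -> Z (u, a) \/ R u a -> (\bigcup_(X in F) X) (u, a) \/ R u a.
    by move=> Z u a FZ [H|H]; [left; exists Z|right].
  have cases : forall u a, (\bigcup_(X in F) X) (u, a) \/ R u a -> R u a \/ exists2 X, F X & X (u, a).
    by move=> u a [[X FX H]|H]; [right; exists X|left].
  split.
  - by right.
  - move=> u a v b /cases [Hu|[X FX Hu]] /cases [Hv|[Y FY Hv]]; first by right; apply: RD.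
    + by have [_ D _ _] := FP _ FY; apply: inR FY (D _ _ _ _ (or_intror Hu) (or_introl Hv)).
    + by have [_ D _ _] := FP _ FX; apply: inR FX (D _ _ _ _ (or_introl Hu) (or_intror Hv)).
    + have [Z [FZ Hu' Hv']] := big2 _ _ _ _ _ _ FX FY (or_introl Hu) (or_introl Hv).
      by have [_ D _ _] := FP _ FZ; apply: inR FZ (D _ _ _ _ Hu' Hv').
  - move=> c u a /cases [Hu|[X FX Hu]]; first by right; apply: RZ.
    by have [_ _ Z _] := FP _ FX; apply: inR FX (Z c _ _ (or_introl Hu)).
  - move=> u a b /cases [Hu|[X FX Hu]] /cases [Hv|[Y FY Hv]]; first exact: RU Hu Hv.
    + by have [_ _ _ U] := FP _ FY; apply: U (or_intror Hu) (or_introl Hv).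
    + by have [_ _ _ U] := FP _ FX; apply: U (or_introl Hu) (or_intror Hv).
    + have [Z [FZ Hu' Hv']] := big2 _ _ _ _ _ _ FX FY (or_introl Hu) (or_introl Hv).
      by have [_ _ _ U] := FP _ FZ; apply: U Hu' Hv'.
pose G u a := A (u, a) \/ R u a.
have [G0 GD GZ GU] : linrel G := PA.
have Gtot : forall v, exists a, G v a.
  move=> v0; apply: contrapT => Hv0.
  pose B : set (M * k)%type := fun p => exists w d c, [/\ G w d, p.1 = w + sc c v0 & p.2 = d].
  apply: (Amax B).
    split.
      move=> [u a] Au; exists u, a, 0; split => //=; first by left.
      by rewrite sc0 addr0.
    move=> sBA; apply: Hv0; exists 0; left; apply: sBA; exists 0, 0, 1; split => //=.
    by rewrite sc1 add0r.
  have BR : forall u a, B (u, a) \/ R u a -> exists w c, G w a /\ u = w + sc c v0.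
    move=> u a [[w [d [c [Gw /= -> ->]]]]|Ru]; first by exists w, c.
    by exists u, 0; split; [right|rewrite sc0 addr0].
  have toB : forall w c a, G w a -> B (w + sc c v0, a) \/ R (w + sc c v0) a.
    by move=> w c a Gw; left; exists w, a, c.
  split.
  - by right; case: HR.
  - move=> u a v b /BR [w1 [c1 [G1 ->]]] /BR [w2 [c2 [G2 ->]]].
    have -> : w1 + sc c1 v0 + (w2 + sc c2 v0) = (w1 + w2) + sc (c1 + c2) v0.
      by rewrite scD addrACA.
    exact/toB/GD.
  - move=> c u a /BR [w [c1 [G1 ->]]].
    rewrite scDr scM; exact/toB/GZ.
  - move=> u a b /BR [w1 [c1 [G1 ->]]] /BR [w2 [c2 [G2 E]]].
    have [Ec|Nc] := eqVneq c1 c2.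
      move: E; rewrite Ec => /addIr Ew; rewrite Ew in G1; exact: GU G1 G2.
    exfalso; apply: Hv0.
    have Hdiff : G (w2 - w1) (b - a).
      by have := GD _ _ _ _ G2 (GZ (-1) _ _ G1); rewrite scN1 mulN1r.
    have scNl : forall c m, sc (- c) m = - sc c m.
      by move=> c m; rewrite -mulN1r -scM scN1.
    have Hsc : w2 - w1 = sc (c1 - c2) v0.
      have -> : w2 = w1 + sc c1 v0 - sc c2 v0 by rewrite E addrK.
      by rewrite scD scNl addrAC (addrAC w1) subrr add0r.
    exists ((c1 - c2)^-1 * (b - a)).
    have := GZ ((c1 - c2)^-1) _ _ Hdiff; rewrite Hsc scM mulVf ?sc1 //.
    by rewrite subr_eq0.
pose L v := projT1 (cid (Gtot v)).
have LP : forall v, G v (L v) by move=> v; rewrite /L; case: cid.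
exists L; split.
- by move=> u v; apply: GU (LP _) (GD _ _ _ _ (LP u) (LP v)).
- by move=> c u; apply: GU (LP _) (GZ _ _ _ (LP u)).
- by move=> u a Ru; apply: GU (LP _) (or_intror Ru).
Qed.
End Ext.



Section HomL.
Variable k : fieldType.
Variables M N : pmodule k.
Variable f : M -> N.
Hypothesis hf : is_hom f.
Lemma hom0 : f 0 = 0.
Proof. case: hf => hD _; have := hD 0 0; rewrite addr0 => /eqP; by rewrite -subr_eq subrr eq_sym => /eqP. Qed.
Lemma homN u : f (- u) = - f u.
Proof. case: hf => hD _; apply/eqP; by rewrite -addr_eq0 -hD addNr hom0. Qed.
Lemma homD u v : f (u + v) = f u + f v.
Proof. by case: hf. Qed.
Lemma homB u v : f (u - v) = f u - f v.
Proof. by rewrite homD homN. Qed.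
Lemma homA a u : f (pact a u) = pact a (f u).
Proof. by case: hf. Qed.
Lemma homsc c u : f (sc c u) = sc c (f u).
Proof. exact: homA. Qed.
End HomL.

Section JMod.
Variable k : fieldType.
Variable s : pser k.

Record Jt := MkJ {
  jf : nat -> pser k -> k;
  jadd : forall n a b, jf n (a + b) = jf n a + jf n b;
  jsc : forall n c a, jf n (pconst c * a) = c * jf n a;
  jcomp : forall n a, jf n a = jf n.+1 (s * a) }.

Lemma Jext (x y : Jt) : (forall n a, jf x n a = jf y n a) -> x = y.
Proof.
case: x => fx ax sx cx; case: y => fy ay sy cy /= H.
have E : fx = fy by do 2 apply: functional_extensionality => ?; apply: H.
subst fy; f_equal; apply: proof_irrelevance.
Qed.

Definition Jzero : Jt.
Proof. refine (@MkJ (fun _ _ => 0) _ _ _) => *; by rewrite ?addr0 ?mulr0. Defined.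
Definition Jadd (x y : Jt) : Jt.
Proof.
refine (@MkJ (fun n a => jf x n a + jf y n a) _ _ _).
- by move=> n a b; rewrite !jadd addrACA.
- by move=> n c a; rewrite !jsc mulrDr.
- by move=> n a; rewrite -!jcomp.
Defined.
Definition Jopp (x : Jt) : Jt.
Proof.
refine (@MkJ (fun n a => - jf x n a) _ _ _).
- by move=> n a b; rewrite !jadd opprD.
- by move=> n c a; rewrite !jsc mulrN.
- by move=> n a; rewrite -!jcomp.
Defined.
Lemma JaddA : associative Jadd. Proof. by move=> x y z; apply: Jext => n a /=; rewrite addrA. Qed.
Lemma JaddC : commutative Jadd. Proof. by move=> x y; apply: Jext => n a /=; rewrite addrC. Qed.
Lemma Jadd0 : left_id Jzero Jadd. Proof. by move=> x; apply: Jext => n a /=; rewrite add0r. Qed.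
Lemma JaddN : left_inverse Jzero Jopp Jadd. Proof. by move=> x; apply: Jext => n a /=; rewrite addNr. Qed.
HB.instance Definition _ := gen_eqMixin Jt.
HB.instance Definition _ := gen_choiceMixin Jt.
HB.instance Definition _ := GRing.isZmodule.Build Jt JaddA JaddC Jadd0 JaddN.

Definition Jact (b : pser k) (x : Jt) : Jt.
Proof.
refine (@MkJ (fun n a => jf x n (a * b)) _ _ _).
- by move=> n a a'; rewrite mulrDl jadd.
- by move=> n c a; rewrite -mulrA jsc.
- by move=> n a; rewrite jcomp mulrA.
Defined.
Lemma Jact1 (x : Jt) : Jact (pone k) x = x.
Proof. by apply: Jext => n a /=; rewrite pone1 mulr1. Qed.
Lemma JactM a b (x : Jt) : Jact (pmul a b) x = Jact a (Jact b x).
Proof. by apply: Jext => n c /=; rewrite pmulE mulrA. Qed.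
Lemma JactDl a b (x : Jt) : Jact (padd a b) x = Jact a x + Jact b x.
Proof. by apply: Jext => n c /=; rewrite paddE mulrDr jadd. Qed.
Lemma JactDr a (x y : Jt) : Jact a (x + y) = Jact a x + Jact a y.
Proof. by apply: Jext => n c /=. Qed.

Definition JM : pmodule k := PModule Jact1 JactM JactDl JactDr.

Lemma jf_zero n a : jf (0 : JM) n a = 0. Proof. by []. Qed.
Lemma jf_act b (x : JM) n a : jf (pact b x) n a = jf x n (a * b). Proof. by []. Qed.

Lemma J_socle p t : s = p * t -> forall x : JM, pact p x = 0 -> x = 0.
Proof.
move=> st x H; apply: Jext => n a; rewrite jf_zero jcomp st.
have -> : p * t * a = (t * a) * p by ring.
by rewrite -jf_act H.
Qed.
End JMod.
Lemma jf_add (k : fieldType) (s : pser k) (x y : JM s) n a : jf (x + y) n a = jf x n a + jf y n a. Proof. by []. Qed.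
Lemma jf_opp (k : fieldType) (s : pser k) (x : JM s) n a : jf (- x) n a = - jf x n a. Proof. by []. Qed.
Lemma jf_act' (k : fieldType) (s : pser k) b (x : JM s) n a : jf (pact b x) n a = jf x n (a * b). Proof. by []. Qed.
Lemma jf_zero' (k : fieldType) (s : pser k) n a : jf (0 : JM s) n a = 0 :> k. Proof. by []. Qed.



Section PactMore.
Variable k : fieldType.
Variable M : pmodule k.
Lemma pact_comm (a b : pser k) (m : M) : pact a (pact b m) = pact b (pact a m).
Proof. by rewrite -!pactMr mulrC. Qed.
Lemma pact_expD (s : pser k) t1 t2 (m : M) : pact (s ^+ (t1 + t2)) m = pact (s ^+ t1) (pact (s ^+ t2) m).
Proof. by rewrite exprD pactMr. Qed.
Lemma pact_expS (s : pser k) t (m : M) : pact (s ^+ t.+1) m = pact s (pact (s ^+ t) m).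
Proof. by rewrite exprS pactMr. Qed.
Lemma sc_comm (a : pser k) c (m : M) : pact a (sc c m) = sc c (pact a m).
Proof. exact: pact_comm. Qed.
End PactMore.

Section JInj.
Variable k : fieldType.
Variable s : pser k.

Theorem J_inj : injective_module (JM s).
Proof.
move=> N N' i h Hi Hinj Hh.
pose lam m (n : N) := jf (h n) m 1.
have L0 : forall m, lam m 0 = 0 by move=> m; rewrite /lam (hom0 Hh).
have L1 : forall m n1 n2, lam m (n1 + n2) = lam m n1 + lam m n2.
  by move=> m n1 n2; rewrite /lam (homD Hh).
have Lsc : forall m c n, lam m (sc c n) = c * lam m n.
  by move=> m c n; rewrite /lam (homsc Hh) /sc jf_act' mul1r -[pconst c]mulr1 jsc.
have LNl : forall m n, lam m (- n) = - lam m n.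
  by move=> m n; rewrite /lam (homN Hh).
have L4 : forall m n a, jf (h n) m a = lam m (pact a n).
  by move=> m n a; rewrite /lam (homA Hh) jf_act' mul1r.
have L3 : forall m n, lam m n = lam m.+1 (pact s n).
  by move=> m n; rewrite -L4 /lam jcomp mulr1.
have L3t : forall t m n, lam m n = lam (m + t)%N (pact (s ^+ t) n).
  elim=> [|t IH] m n; first by rewrite addn0 expr0 pact1r.
  by rewrite IH L3 pact_expS addnS.
have i0 : i 0 = 0 := hom0 Hi.
pose good m (L : N' -> k) := [/\ (forall u v, L (u + v) = L u + L v),
   (forall c u, L (sc c u) = c * L u) &
   (forall v n t, pact (s ^+ t) v = i n -> L v = lam (m + t)%N n)].
have base : exists L, good 0%N L.
  pose R0 (v : N') c := exists n t, pact (s ^+ t) v = i n /\ c = lam t n.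
  have [|L [LD LZ LR]] := @extend k N' R0.
    split.
    - by exists 0, 0%N; rewrite pactr0' i0 L0.
    - move=> u a v b [n1 [t1 [E1 ->]]] [n2 [t2 [E2 ->]]].
      exists (pact (s ^+ t2) n1 + pact (s ^+ t1) n2), (t1 + t2)%N; split.
        by rewrite pactDr (homD Hi) !(homA Hi) -E1 -E2 -!pact_expD addnC.
      by rewrite L1 -L3t addnC -L3t.
    - move=> c u a [n [t [E ->]]]; exists (sc c n), t; split; last by rewrite Lsc.
      by rewrite sc_comm E (homsc Hi).
    - move=> u a b [n1 [t1 [E1 ->]]] [n2 [t2 [E2 ->]]].
      have : i (pact (s ^+ t2) n1) = i (pact (s ^+ t1) n2).
        by rewrite !(homA Hi) -E1 -E2 -!pact_expD addnC.
      by move/Hinj => E; rewrite (L3t t2) E addnC -L3t.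
  exists L; split => // v n t E; apply: LR; by exists n, t.
have step : forall m L, good m L -> exists L', good m.+1 L' /\ forall v, L' (pact s v) = L v.
  move=> m L [LD LZ LI].
  have LL0 : L 0 = 0.
    by have := LD 0 0; rewrite addr0 => /eqP; rewrite -subr_eq subrr eq_sym => /eqP.
  have LN : forall u, L (- u) = - L u.
    by move=> u; apply/eqP; rewrite -addr_eq0 -LD addNr LL0.
  pose R1 (v : N') c := exists n'' n t, pact (s ^+ t) (v - pact s n'') = i n /\ c = L n'' + lam (m.+1 + t)%N n.
  have [|L' [LD' LZ' LR']] := @extend k N' R1.
    split.
    - by exists 0, 0, 0%N; rewrite pactr0' subr0 pactr0' i0 LL0 L0 addr0.
    - move=> u a v b [n1'' [n1 [t1 [E1 ->]]]] [n2'' [n2 [t2 [E2 ->]]]].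
      exists (n1'' + n2''), (pact (s ^+ t2) n1 + pact (s ^+ t1) n2), (t1 + t2)%N; split.
        rewrite (homD Hi) !(homA Hi) -E1 -E2 -!pact_expD addnC -pactDr; congr pact.
        by rewrite pactDr opprD addrACA.
      rewrite LD L1 (L3t t2 (m.+1 + t1)%N) (L3t t1 (m.+1 + t2)%N) -!addnA (addnC t1).
      by rewrite addrACA.
    - move=> c u a [n'' [n [t [E ->]]]]; exists (sc c n''), (sc c n), t; split.
        have -> : sc c u - pact s (sc c n'') = sc c (u - pact s n'') by rewrite sc_comm scDr /sc pactNr.
        by rewrite sc_comm E (homsc Hi).
      by rewrite LZ Lsc mulrDr.
    - move=> u a b [n1'' [n1 [t1 [E1 ->]]]] [n2'' [n2 [t2 [E2 ->]]]].
      have Ed : pact (s ^+ (t1 + t2).+1) (n1'' - n2'') = i (pact (s ^+ t1) n2 - pact (s ^+ t2) n1).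
        have e1 : pact s (n1'' - n2'') = (u - pact s n2'') - (u - pact s n1'').
          by rewrite pactBr opprB [RHS]addrC subrKA.
        rewrite pact_expS pact_comm e1 pactBr pact_expD E2 addnC pact_expD E1.
        by rewrite (homB Hi) !(homA Hi).
      have A2 : lam (m + (t1 + t2).+1)%N (pact (s ^+ t1) n2) = lam (m.+1 + t2)%N n2.
        by rewrite (L3t t1 (m.+1 + t2)%N); congr (lam _ _); lia.
      have A1 : lam (m + (t1 + t2).+1)%N (pact (s ^+ t2) n1) = lam (m.+1 + t1)%N n1.
        by rewrite (L3t t2 (m.+1 + t1)%N); congr (lam _ _); lia.
      have := LI _ _ _ Ed; rewrite LD LN L1 LNl A1 A2 => H.
      by rewrite -[L n1''](subrK (L n2'')) H; ring.
  exists L'; split; first split => //.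
  - move=> v n t E; apply: LR'; exists 0, n, t; split; first by rewrite pactr0' subr0.
    by rewrite LL0 add0r.
  - move=> v; apply: LR'; exists v, 0, 0%N; split; first by rewrite subrr pactr0' i0.
    by rewrite L0 addr0.
have base' := cid base.
have step' : forall m (L : {L | good m L}), {L' | good m.+1 L' /\ forall v, L' (pact s v) = sval L v}.
  by move=> m L; apply: cid; apply: step; exact: svalP.
pose seqL := fix seqL m : {L | good m L} :=
  match m with 0%N => base' | m'.+1 => let q := step' m' (seqL m') in exist _ (sval q) (proj1 (svalP q)) end.
pose Lam m := sval (seqL m).
have Lgood : forall m, good m (Lam m) by move=> m; exact: svalP.
have Lcomp : forall m v, Lam m.+1 (pact s v) = Lam m v.
  move=> m v; exact (proj2 (svalP (step' m (seqL m))) v).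
have hdef : forall v : N', {x : JM s | forall m a, jf x m a = Lam m (pact a v)}.
  move=> v.
  have P1 : forall m a b, Lam m (pact (a + b) v) = Lam m (pact a v) + Lam m (pact b v).
    by move=> m a b; case: (Lgood m) => LD _ _; rewrite pactDlr LD.
  have P2 : forall m c a, Lam m (pact (pconst c * a) v) = c * Lam m (pact a v).
    by move=> m c a; case: (Lgood m) => _ LZ _; rewrite pactMr LZ.
  have P3 : forall m a, Lam m (pact a v) = Lam m.+1 (pact (s * a) v).
    by move=> m a; rewrite pactMr Lcomp.
  by exists (@MkJ k s (fun m a => Lam m (pact a v)) P1 P2 P3).
pose h' v := sval (hdef v).
have h'E : forall v m a, jf (h' v) m a = Lam m (pact a v) by move=> v; exact (svalP (hdef v)).
exists h'; split; first split.
- move=> u v; apply: Jext => m a; rewrite jf_add !h'E pactDr.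
  by case: (Lgood m) => LD _ _; rewrite LD.
- by move=> b v; apply: Jext => m a; rewrite jf_act' !h'E pactMr.
- move=> n; apply: Jext => m a; rewrite h'E L4 -(homA Hi).
  case: (Lgood m) => _ _ LI; rewrite (LI _ (pact a n) 0%N) ?addn0 //.
  by rewrite expr0 pact1r.
Qed.
End JInj.



Section Prod.
Variable k : fieldType.
Variables M1 M2 : pmodule k.
Definition pairact (a : pser k) (p : (M1 * M2)%type) : (M1 * M2)%type := (pact a p.1, pact a p.2).
Lemma pa1 p : pairact (pone k) p = p. Proof. by case: p => u v; rewrite /pairact !pact1. Qed.
Lemma paM a b p : pairact (pmul a b) p = pairact a (pairact b p). Proof. by case: p => u v; rewrite /pairact !pactM. Qed.
Lemma paDl a b p : pairact (padd a b) p = pairact a p + pairact b p. Proof. by case: p => u v; rewrite /pairact !pactDl. Qed.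
Lemma paDr a p q : pairact a (p + q) = pairact a p + pairact a q. Proof. by case: p => u v; case: q => u' v'; rewrite /pairact /= !pactDr. Qed.
Definition PM : pmodule k := @PModule k (M1 * M2)%type pairact pa1 paM paDl paDr.

Lemma PM_inj : injective_module M1 -> injective_module M2 -> injective_module PM.
Proof.
move=> H1 H2 N N' i h Hi Hinj Hh.
have Hh1 : is_hom (fun n => (h n).1 : M1).
  by split => [u v|a u]; rewrite ?(homD Hh) ?(homA Hh).
have Hh2 : is_hom (fun n => (h n).2 : M2).
  by split => [u v|a u]; rewrite ?(homD Hh) ?(homA Hh).
have [g1 [Hg1 E1]] := H1 N N' i _ Hi Hinj Hh1.
have [g2 [Hg2 E2]] := H2 N N' i _ Hi Hinj Hh2.
exists (fun n => (g1 n, g2 n) : PM); split; first split.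
- by move=> u v; rewrite (homD Hg1) (homD Hg2).
- by move=> a u; rewrite (homA Hg1) (homA Hg2).
- by move=> n; rewrite E1 E2; case: (h n).
Qed.
End Prod.



Section Ideals.
Variable k : fieldType.
Local Notation X := (px k).
Local Notation Y := (py k).

Definition decG (a : pser k) : pser k := fun i j => a i.+1 j.
Definition decH (a : pser k) : pser k := fun i j => if i == 0%N then a 0%N j.+1 else 0.
Lemma decomp (a : pser k) : a = pconst (a 0%N 0%N) + (X * decG a + Y * decH a).
Proof.
apply: functional_extensionality => i; apply: functional_extensionality => j.
rewrite !addE pxM pyM /pconst /decG /decH.
case: i => [|i]; case: j => [|j] /=; by rewrite ?addr0 ?add0r.
Qed.

Lemma max00 (a : pser k) : maxideal a -> a 0%N 0%N = 0.
Proof. by move=> [g [h ->]]; rewrite paddE !pmulE addE pxM pyM addr0. Qed.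
Lemma max_iff (a : pser k) : maxideal a <-> a 0%N 0%N = 0.
Proof.
split; first exact: max00.
move=> H; exists (decG a), (decH a); rewrite paddE !pmulE.
by rewrite {1}(decomp a) H pconst0 add0r.
Qed.

Lemma ann_iff (M : pmodule k) (w : M) : pact X w = 0 -> pact Y w = 0 -> w <> 0 ->
  forall a, pact a w = 0 <-> a 0%N 0%N = 0.
Proof.
move=> Hx Hy Hw a.
have E : pact a w = sc (a 0%N 0%N) w.
  rewrite {1}(decomp a) pactDlr pactDlr (mulrC X) (mulrC Y) !pactMr Hx Hy !pactr0'.
  by rewrite !addr0.
rewrite E; split => [H|->]; last exact: sc0.
have [//|Hn] := eqVneq (a 0%N 0%N) 0; exfalso; apply: Hw.
by rewrite -(sc1 w) -(mulVf Hn) -scM H scr0.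
Qed.

Lemma prime_ann (M : pmodule k) (w : M) : pact X w = 0 -> pact Y w = 0 -> w <> 0 ->
  prime_ideal (fun a => pact a w = 0).
Proof.
move=> Hx Hy Hw; have A := ann_iff Hx Hy Hw.
split; first split; [|split; [|split]|split].
- by rewrite pzeroE pact0l.
- by move=> f g /A Hf /A Hg; apply/A; rewrite paddE addE Hf Hg addr0.
- by move=> f /A Hf; apply/A; rewrite poppE oppE Hf oppr0.
- by move=> a f /A Hf; apply/A; rewrite pmulE mulE00 Hf mulr0.
- by rewrite pact1.
- move=> a b /A; rewrite pmulE mulE00 => /eqP; rewrite mulf_eq0 => /orP [/eqP|/eqP] H.
  + by left; apply/A.
  + by right; apply/A.
Qed.

Definition socle_free (M : pmodule k) := forall v : M, pact X v = 0 -> pact Y v = 0 -> v = 0.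

Lemma maxX : maxideal X.
Proof. by apply/max_iff. Qed.
Lemma maxY : maxideal Y.
Proof. by apply/max_iff. Qed.

Lemma Ass_ok (M : pmodule k) : socle_free M -> forall P, Ass M P -> Phi_punctured P.
Proof.
move=> SF P [PP [m Hm]]; split => // Hs.
have Hx : pact X m = 0 by apply/Hm/Hs; exact: maxX.
have Hy : pact Y m = 0 by apply/Hm/Hs; exact: maxY.
have m0 := SF m Hx Hy.
have : P (pone k) by apply/Hm; rewrite m0 pactr0'.
by move/Hs/max00; rewrite /pone /= => /eqP; rewrite oner_eq0.
Qed.
End Ideals.



Section Main.
Variable k : fieldType.
Local Notation X := (px k).
Local Notation Y := (py k).
Local Notation I0 := (JM (X * Y)).
Local Notation I1 := (PM (JM X) (JM Y)).

Definition Fx (psi : I0) : JM X.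
Proof.
refine (@MkJ k X (fun m a => jf psi m (Y ^+ m * a)) _ _ _).
- by move=> n a b; rewrite mulrDr jadd.
- by move=> n c a; rewrite mulrCA jsc.
- move=> n a; rewrite jcomp; congr (jf _ _ _); rewrite exprS; ring.
Defined.
Definition Fy (psi : I0) : JM Y.
Proof.
refine (@MkJ k Y (fun m a => jf psi m (X ^+ m * a)) _ _ _).
- by move=> n a b; rewrite mulrDr jadd.
- by move=> n c a; rewrite mulrCA jsc.
- move=> n a; rewrite jcomp; congr (jf _ _ _); rewrite exprS; ring.
Defined.
Definition fmap (psi : I0) : I1 := (Fx psi, Fy psi).

Lemma fmap_hom : is_hom fmap.
Proof.
split.
- by move=> u v; congr pair; apply: Jext.
- by move=> a u; congr pair; apply: Jext => m b /=; rewrite mulrA.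
Qed.

Definition phi : JM X.
Proof.
refine (@MkJ k X (fun m a => a m 0%N) _ _ _).
- by [].
- by move=> n c a; rewrite pCM.
- by move=> n a; rewrite pxM.
Defined.
Definition uu : I1 := (phi, 0).

Definition chi : I0.
Proof.
refine (@MkJ k (X * Y) (fun m a => if m is m'.+1 then a m' m else 0) _ _ _).
- by case=> [|n] a b; rewrite ?addr0.
- by case=> [|n] c a; rewrite ?mulr0 ?pCM.
- by case=> [|n] a; rewrite -mulrA pxM ?pyM.
Defined.

Lemma u_notin (psi : I0) : fmap psi <> uu.
Proof.
move=> E.
have E1 : jf (Fx psi) 0%N 1 = jf phi 0%N 1 := f_equal (fun z => jf z 0%N 1) (f_equal fst E).
have E2 : jf (Fy psi) 0%N 1 = jf (0 : JM Y) 0%N 1 := f_equal (fun z => jf z 0%N 1) (f_equal snd E).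
move: E1 E2 => /= E1 E2; rewrite !expr0 in E1 E2; rewrite E2 oneE /= in E1.
by move/eqP: E1; rewrite eq_sym oner_eq0.
Qed.

Lemma xu_in : fmap chi = pact X uu.
Proof.
congr pair; apply: Jext => m a /=.
- rewrite [a * X]mulrC pxM; case: m => [|m] //; rewrite pynM leqnn subnn //.
- case: m => [|m] //; rewrite pxnM ltnn //.
Qed.

Lemma yu_in : fmap 0 = pact Y uu.
Proof.
congr pair; apply: Jext => m a /=.
- by rewrite [a * Y]mulrC pyM.
- by [].
Qed.

Lemma I0_ok : in_Inj (@Phi_punctured k) I0.
Proof.
split; first exact: J_inj.
apply: Ass_ok => v Hx _; exact: (J_socle (t := Y) erefl Hx).
Qed.

Lemma I1_ok : in_Inj (@Phi_punctured k) I1.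
Proof.
split; first by apply: PM_inj; exact: J_inj.
apply: Ass_ok => [[v w]] Hx Hy.
have Hx1 : pact X v = 0 := f_equal fst Hx.
have Hy1 : pact Y w = 0 := f_equal snd Hy.
by rewrite (J_socle (esym (mulr1 X)) Hx1) (J_socle (esym (mulr1 Y)) Hy1).
Qed.

Theorem main : ~ coherent (@Phi_punctured k).
Proof.
move=> Hc.
have [I2 [g [[_ AssI2] [Hg Hex]]]] := Hc I0 I1 fmap I0_ok I1_ok fmap_hom.
have gu0 : g uu <> 0 by move/Hex => [v Hv]; exact: u_notin Hv.
have gx : pact X (g uu) = 0 by rewrite -(homA Hg); apply/Hex; exists chi; exact: xu_in.
have gy : pact Y (g uu) = 0 by rewrite -(homA Hg); apply/Hex; exists 0; exact: yu_in.
have AP : Ass I2 (fun a => pact a (g uu) = 0).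
  by split; [exact: prime_ann | exists (g uu)].
have [_ HP] := AssI2 _ AP.
apply: HP => a; rewrite max_iff; exact: ann_iff.
Qed.
End Main.

Theorem mainTheorem7 (k : fieldType) :
  ~ coherent (@Phi_punctured k).
Proof. exact: main. Qed.
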